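(* Let $\Delta\vdash t$ be a closed nominal term-in-context and $\sigma$ a nominal substitution satisfying $\Delta$ (i.e., $\vdash a\#X\sigma$ for all $a\#X\in\Delta$) with domain contained in the variables of $t$ and $t\sigma$ ground. Let $\hat\sigma=\mathcal{T}^{s}(\Delta,t,\sigma)$. Then for every subterm $t'$ of $t$ (in particular $t'=t$), $[\![t'\sigma]\!]^{\Delta}_{\Lambda_t}=\hat\sigma([\![t']\!]^{\Delta}_{\Lambda_t})$.
   Context: Nominal terms: $s,t ::= a \mid \pi\cdot X \mid [a]s \mid f\,s \mid (s_1,\ldots,s_n)$ over atoms, variables, function symbols and finite-support permutations $\pi$ of atoms acting on terms in the usual nominal way. A freshness context $\Delta$ is a set of constraints $a\#X$; freshness judgements $\vdash a\#s$ are the standard nominal ones. Substitutions map variables to terms and are applied without avoiding capture, $(\pi\cdot X)\sigma=\pi\cdot(X\sigma)$. $\Delta\vdash t$ is closed if: (1) every atom occurrence $a$ in $t$ lies under an abstraction $[a]$; (2) if $\pi\cdot X$ is in the scope of an abstraction of $\pi(a)$ then every occurrence $\pi'\cdot X$ of $X$ in $t$ is in the scope of an abstraction of $\pi'(a)$, or $a\#X\in\Delta$; (3) for two occurrences $\pi_1\cdot X,\pi_2\cdot X$ and $a$ with $\pi_1(a)\neq\pi_2(a)$, if $a$ is not abstracted in one of the occurrences then $a\#X\in\Delta$. CRS: meta-terms $a\mid Z(t_1,\dots,t_n)\mid[a]t\mid f\,t\mid(t_1,\dots,t_n)$ modulo bound-variable renaming; a valuation assigns to an $n$-ary meta-variable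 a substitute $\underline{\lambda}(a_1,\dots,a_n).s$, and $\hat\sigma(Z(u_1,\dots,u_n))$ is $s$ with each $a_i$ replaced capture-avoidingly by $\hat\sigma(u_i)$, $\hat\sigma$ homomorphic on other constructs. Translation: $\Lambda_t(X)$ is the set of atoms $a$ such that some occurrence of $X$ in $t$ is in the scope of $[a]$ (a map from variables to sets of atoms). Fix a total order on atoms. For a map $\Lambda$ from variables to atom sets, $[\![\cdot]\!]^{\Delta}_{\Lambda}$ keeps atoms, abstractions, function applications and tuples unchanged and maps $\pi\cdot X$ to $X(\pi\cdot xs)$, where $xs$ is the ascending list of $\{\pi^{-1}(a)\mid a\in\Lambda(X)\}\setminus\{a\mid a\#X\in\Delta\}$ and $\pi$ is applied elementwise (no arguments if empty). Substitution translation: for $\sigma=[X_i\mapsto t_i]$, $\mathcal{T}^{s}(\Delta,t,\sigma)=[X_i\mapsto\underline{\lambda}(\pi_i\cdot xs_i).s_i]$, where $\pi_i$ is the permutation of the leftmost occurrence $\pi_i\cdot X_i$ of $X_i$ in $t$, $xs_i$ is the ascending list of $\{\pi_i^{-1}(a)\mid a\in\Lambda_t(X_i)\}\setminus\{a\mid a\#X_i\in\Delta\}$, and $s_i=[\![\pi_i\cdot t_i]\!]^{\Delta}_{\Lambda_{\pi_i\cdot t_i}}$. *)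

(* Defs.v *)
From Stdlib Require List.
From mathcomp Require Import all_boot.
Set Implicit Arguments. Unset Strict Implicit. Unset Printing Implicit Defensive.

(* Atoms, variables (= CRS meta-variables) and function symbols are nats;
   the fixed total order on atoms is the usual order [leq] on nat. *)
Definition atom := nat.
Definition var := nat.
Definition fsym := nat.

(* Finite-support permutations of atoms, represented as finite lists of
   swaps (every finite-support permutation is such a composition).
   The head swap is applied last. *)
Definition perm := seq (atom * atom).
Definition swap (s : atom * atom) (c : atom) : atom :=
  if c == s.1 then s.2 else if c == s.2 then s.1 else c.
Fixpoint perm_act (p : perm) (c : atom) : atom :=
  if p is s :: p' then swap s (perm_act p' c) else c.
Definition perm_inv (p : perm) : perm := rev p.

Inductive nterm : Type :=
| NAtom : atom -> nterm
| NSusp : perm -> var -> nterm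
| NAbs  : atom -> nterm -> nterm
| NApp  : fsym -> nterm -> nterm
| NTup  : seq nterm -> nterm.

Fixpoint pact (p : perm) (t : nterm) : nterm :=
  match t with
  | NAtom a => NAtom (perm_act p a)
  | NSusp q X => NSusp (p ++ q) X
  | NAbs a s => NAbs (perm_act p a) (pact p s)
  | NApp f s => NApp f (pact p s)
  | NTup ts => NTup (map (pact p) ts)
  end.

(* freshness contexts: a # X is the pair (a, X) *)
Definition fctx := seq (atom * var).

Fixpoint fresh (D : fctx) (a : atom) (t : nterm) : bool :=
  match t with
  | NAtom b => a != b
  | NSusp p X => (perm_act (perm_inv p) a, X) \in D
  | NAbs b s => (a == b) || fresh D a s
  | NApp _ s => fresh D a s
  | NTup ts => all (fresh D a) ts
  end.

(* nominal substitutions (finite domain given by the hypotheses);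
   applied without avoiding capture *)
Definition nsubst := var -> option nterm.
Fixpoint napply (sg : nsubst) (t : nterm) : nterm :=
  match t with
  | NAtom a => NAtom a
  | NSusp p X => if sg X is Some u then pact p u else NSusp p X
  | NAbs a s => NAbs a (napply sg s)
  | NApp f s => NApp f (napply sg s)
  | NTup ts => NTup (map (napply sg) ts)
  end.

(* occurrences, left to right (pre-order), together with the list of atoms
   abstracted above the occurrence *)
Fixpoint atom_occs (bs : seq atom) (t : nterm) : seq (atom * seq atom) :=
  match t with
  | NAtom a => [:: (a, bs)]
  | NSusp _ _ => [::]
  | NAbs b s => atom_occs (b :: bs) s
  | NApp _ s => atom_occs bs s
  | NTup ts => flatten (map (atom_occs bs) ts)
  end.

Fixpoint var_occs (bs : seq atom) (t : nterm) : seq (perm * var * seq atom) :=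
  match t with
  | NAtom _ => [::]
  | NSusp p X => [:: (p, X, bs)]
  | NAbs b s => var_occs (b :: bs) s
  | NApp _ s => var_occs bs s
  | NTup ts => flatten (map (var_occs bs) ts)
  end.

Definition vars (t : nterm) : seq var := [seq o.1.2 | o <- var_occs [::] t].
Definition ground (t : nterm) : Prop := var_occs [::] t = [::].

Inductive subterm : nterm -> nterm -> Prop :=
| subterm_refl t : subterm t t
| subterm_abs t a s : subterm t s -> subterm t (NAbs a s)
| subterm_app t f s : subterm t s -> subterm t (NApp f s)
| subterm_tup t s ts : List.In s ts -> subterm t s -> subterm t (NTup ts).

Definition closed_term (D : fctx) (t : nterm) : Prop :=
  (forall a bs, (a, bs) \in atom_occs [::] t -> a \in bs) /\
  (forall p X bs a, (p, X, bs) \in var_occs [::] t -> perm_act p a \in bs ->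
     forall p' bs', (p', X, bs') \in var_occs [::] t ->
       perm_act p' a \in bs' \/ (a, X) \in D) /\
  (forall p1 bs1 p2 bs2 X a,
     (p1, X, bs1) \in var_occs [::] t -> (p2, X, bs2) \in var_occs [::] t ->
     perm_act p1 a != perm_act p2 a ->
     (perm_act p1 a \notin bs1 \/ perm_act p2 a \notin bs2) ->
     (a, X) \in D).

Definition satisfies (sg : nsubst) (D : fctx) : Prop :=
  forall a X, (a, X) \in D -> fresh [::] a (napply sg (NSusp [::] X)).

Definition abs_map := var -> seq atom.
Definition Lambda (t : nterm) : abs_map :=
  fun X => flatten [seq o.2 | o <- var_occs [::] t & o.1.2 == X].

Inductive mterm : Type :=
| MAtom : atom -> mterm
| MMeta : var -> seq mterm -> mterm
| MAbs  : atom -> mterm -> mterm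
| MApp  : fsym -> mterm -> mterm
| MTup  : seq mterm -> mterm.

Fixpoint matoms (t : mterm) : seq atom :=
  match t with
  | MAtom a => [:: a]
  | MMeta _ us => flatten (map matoms us)
  | MAbs a s => a :: matoms s
  | MApp _ s => matoms s
  | MTup ts => flatten (map matoms ts)
  end.

Definition fresh_atom (l : seq atom) : atom := (foldr maxn 0 l).+1.

Fixpoint lookup (th : seq (atom * mterm)) (a : atom) : option mterm :=
  if th is (b, u) :: th' then (if a == b then Some u else lookup th' a)
  else None.

(* capture-avoiding simultaneous substitution of atoms by meta-terms
   (binders are always renamed to a fresh atom) *)
Fixpoint msubst (th : seq (atom * mterm)) (t : mterm) : mterm :=
  match t with
  | MAtom a => if lookup th a is Some u then u else MAtom a
  | MMeta Z us => MMeta Z (map (msubst th) us)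
  | MAbs a s =>
      let c := fresh_atom (a :: matoms s ++ map fst th
                            ++ flatten (map (fun p => matoms p.2) th)) in
      MAbs c (msubst ((a, MAtom c) :: th) s)
  | MApp f s => MApp f (msubst th s)
  | MTup ts => MTup (map (msubst th) ts)
  end.

Fixpoint var_rel (E : seq (atom * atom)) (a b : atom) : bool :=
  if E is (x, y) :: E' then
    (if x == a then y == b else if y == b then false else var_rel E' a b)
  else a == b.

Fixpoint aeq_env (E : seq (atom * atom)) (s t : mterm) : bool :=
  match s, t with
  | MAtom a, MAtom b => var_rel E a b
  | MMeta Z us, MMeta Z' vs => (Z == Z') && all2 (aeq_env E) us vs
  | MAbs a s', MAbs b t' => aeq_env ((a, b) :: E) s' t'
  | MApp f s', MApp g t' => (f == g) && aeq_env E s' t'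
  | MTup us, MTup vs => all2 (aeq_env E) us vs
  | _, _ => false
  end.
Definition aeq (s t : mterm) : Prop := aeq_env [::] s t.

(* valuations: Z |-> \lambda(a1,...,an).s *)
Definition valuation := var -> option (seq atom * mterm).
Fixpoint valapp (V : valuation) (t : mterm) : mterm :=
  match t with
  | MAtom a => MAtom a
  | MMeta Z us =>
      let us' := map (valapp V) us in
      if V Z is Some (bs, s) then msubst (zip bs us') s else MMeta Z us'
  | MAbs a s => MAbs a (valapp V s)
  | MApp f s => MApp f (valapp V s)
  | MTup ts => MTup (map (valapp V) ts)
  end.

Definition xs_of (D : fctx) (L : abs_map) (p : perm) (X : var) : seq atom :=
  sort leq (undup [seq b <- [seq perm_act (perm_inv p) a | a <- L X]
                   | (b, X) \notin D]).

Fixpoint trans (D : fctx) (L : abs_map) (t : nterm) : mterm :=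
  match t with
  | NAtom a => MAtom a
  | NSusp p X => MMeta X (map (fun a => MAtom (perm_act p a)) (xs_of D L p X))
  | NAbs a s => MAbs a (trans D L s)
  | NApp f s => MApp f (trans D L s)
  | NTup ts => MTup (map (trans D L) ts)
  end.

Definition leftmost_perm (t : nterm) (X : var) : option perm :=
  ohead [seq o.1.1 | o <- var_occs [::] t & o.1.2 == X].

Definition trans_subst (D : fctx) (t : nterm) (sg : nsubst) : valuation :=
  fun X =>
    match sg X, leftmost_perm t X with
    | Some u, Some p =>
        Some (map (perm_act p) (xs_of D (Lambda t) p X),
              trans D (Lambda (pact p u)) (pact p u))
    | _, _ => None
    end.

(* Main.v *)
Require Import Defs.
From mathcomp Require Import all_boot.
Set Implicit Arguments. Unset Strict Implicit. Unset Printing Implicit Defensive.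

Section Ind.
Variable P : nterm -> Prop.
Hypothesis Ha : forall a, P (NAtom a).
Hypothesis Hs : forall p X, P (NSusp p X).
Hypothesis Hb : forall a s, P s -> P (NAbs a s).
Hypothesis Hf : forall f s, P s -> P (NApp f s).
Hypothesis Ht : forall ts, (forall s, List.In s ts -> P s) -> P (NTup ts).
Fixpoint nt_ind (t : nterm) : P t :=
  match t with
  | NAtom a => Ha a
  | NSusp p X => Hs p X
  | NAbs a s => Hb a (nt_ind s)
  | NApp f s => Hf f (nt_ind s)
  | NTup ts => Ht ((fix G (l : seq nterm) : forall s, List.In s l -> P s :=
       match l with
       | nil => fun s H => False_ind _ H
       | cons x l' => fun s H => match H with
            | or_introl e => eq_ind x P (nt_ind x) s e
            | or_intror H' => G l' s H' end
       end) ts)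
  end.
End Ind.

Lemma swapK s c : swap s (swap s c) = c.
Proof.
case: s => x y; rewrite /swap /=.
have [->|hx] := eqVneq c x; first by rewrite eqxx; case: eqVneq.
have [->|hy] := eqVneq c y; first by rewrite eqxx.
by rewrite (negbTE hx) (negbTE hy).
Qed.

Lemma perm_act_cat l1 l2 x : perm_act (l1 ++ l2) x = perm_act l1 (perm_act l2 x).
Proof. by elim: l1 => //= s l IH; rewrite IH. Qed.

Lemma perm_invK p c : perm_act (perm_inv p) (perm_act p c) = c.
Proof.
elim: p c => //= s p IH c.
by rewrite /perm_inv rev_cons -cats1 perm_act_cat /= swapK IH.
Qed.

Lemma perm_Kinv p c : perm_act p (perm_act (perm_inv p) c) = c.
Proof. by have := perm_invK (rev p) c; rewrite /perm_inv revK. Qed.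

Lemma perm_inj p : injective (perm_act p).
Proof. by move=> a b e; rewrite -(perm_invK p a) e perm_invK. Qed.

Lemma in_flatten_map (A : Type) (B : eqType) (f : A -> seq B) l y :
  y \in flatten (map f l) -> exists x, List.In x l /\ y \in f x.
Proof.
elim: l => //= x l IH; rewrite mem_cat => /orP[h|/IH[z [h1 h2]]].
  by exists x; split => //; left.
by exists z; split => //; right.
Qed.

Lemma in_flatten_map2 (A : Type) (B : eqType) (f : A -> seq B) l y x :
  List.In x l -> y \in f x -> y \in flatten (map f l).
Proof.
elim: l => //= z l IH [<-|h] hy; rewrite mem_cat; first by rewrite hy.
by rewrite IH ?orbT.
Qed.

Lemma occs_move s B p X bs : (p, X, bs) \in var_occs B s ->
  forall B', exists bs', (p, X, bs') \in var_occs B' s.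
Proof.
elim/nt_ind: s B => /=.
- by move=> a B; rewrite in_nil.
- by move=> q Y B; rewrite inE => /eqP [-> -> _] B'; exists B'; rewrite inE.
- by move=> a s IH B /IH h B'; apply: h.
- by move=> f s IH B /IH h B'; apply: h.
- move=> ts IH B /in_flatten_map [x [hx /IH h]] B'.
  have [bs' hb] := h hx B'; exists bs'; exact: in_flatten_map2 hx hb.
Qed.

Lemma subterm_occs t' t : subterm t' t -> forall B p X bs,
  (p, X, bs) \in var_occs B t' -> exists bs', (p, X, bs') \in var_occs [::] t.
Proof.
elim => {t' t}.
- by move=> t B p X bs /occs_move; apply.
- move=> t a s _ IH B p X bs /IH [bs' /occs_move h]; exact: h.
- move=> t f s _ IH B p X bs /IH [bs' /occs_move h]; exact: h.
- move=> t s ts hin _ IH B p X bs /IH [bs' h].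
  have [bs2 h2] := occs_move h [::]; exists bs2 => /=.
  exact: in_flatten_map2 hin h2.
Qed.

Fixpoint isg (t : nterm) : bool :=
  match t with
  | NAtom _ => true
  | NSusp _ _ => false
  | NAbs _ s => isg s
  | NApp _ s => isg s
  | NTup ts => all isg ts
  end.

Fixpoint copy (t : nterm) : mterm :=
  match t with
  | NAtom a => MAtom a
  | NSusp _ X => MMeta X [::]
  | NAbs a s => MAbs a (copy s)
  | NApp f s => MApp f (copy s)
  | NTup ts => MTup (map copy ts)
  end.

Lemma allP' (A : Type) (P : pred A) l : all P l -> forall x, List.In x l -> P x.
Proof. by elim: l => //= y l IH /andP[h1 h2] x [<-|/IH]; auto. Qed.

Lemma allP2 (A : Type) (P : pred A) l : (forall x, List.In x l -> P x) -> all P l.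
Proof. elim: l => //= y l IH h; rewrite h /=; [apply: IH|left] => //; by move=> x hx; apply: h; right. Qed.

Lemma isg_pact p u : isg (pact p u) = isg u.
Proof.
elim/nt_ind: u => //= ts IH; rewrite all_map.
apply/idP/idP => h; apply: allP2 => x hx /=.
  by rewrite -IH //; apply: (allP' h).
by rewrite IH //; apply: (allP' h).
Qed.

Lemma trans_isg D L g : isg g -> trans D L g = copy g.
Proof.
elim/nt_ind: g => //=.
- by move=> a s IH /IH ->.
- by move=> a s IH /IH ->.
- move=> ts IH h; congr MTup; elim: ts IH h => //= x l IHl IH /andP[h1 h2].
  by rewrite IH ?IHl //; [move=> s hs; apply: IH; right | left].
Qed.

Lemma pact_nil u : pact [::] u = u.
Proof.
elim/nt_ind: u => //=.
- by move=> a s ->.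
- by move=> a s ->.
- move=> ts IH; congr NTup; elim: ts IH => //= x l IHl IH.
  by rewrite IH ?IHl //; [move=> s hs; apply: IH; right | left].
Qed.

Lemma cat_eq_nil (T : Type) (s1 s2 : seq T) : s1 ++ s2 = [::] -> s1 = [::] /\ s2 = [::].
Proof. by case: s1. Qed.

Lemma occs_isg g B : var_occs B g = [::] -> isg g.
Proof.
elim/nt_ind: g B => //=.
+ by move=> a s IH B /IH.
+ move=> ts IH B h; apply: allP2 => x hx; apply: (IH x hx B).
  elim: ts hx h {IH} => //= y l IHl [<-|hx] /cat_eq_nil [h1 h2] //.
  exact: IHl.
Qed.

Lemma ground_napply sg s B : var_occs B (napply sg s) = [::] ->
  forall p X bs, (p, X, bs) \in var_occs B s ->
  exists u, sg X = Some u /\ isg u.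
Proof.
elim/nt_ind: s B => /=.
- by move=> a B _ p X bs; rewrite in_nil.
- move=> q Y B; case E: (sg Y) => [u|] /=; last by [].
  move=> h p X bs; rewrite inE => /eqP [_ -> _]; exists u; split => //.
  by rewrite -(isg_pact q); apply: occs_isg h.
- by move=> a s IH B h p X bs /IH; apply.
- by move=> a s IH B h p X bs /IH; apply.
- move=> ts IH B h p X bs /in_flatten_map [x [hx hb]].
  apply: (IH x hx B _ p X bs hb).
  elim: ts hx h {IH hb} => //= y l IHl [<-|hx] /cat_eq_nil [h1 h2] //.
  exact: IHl.
Qed.

Lemma notall_In (A : Type) (P : pred A) l : ~~ all P l -> exists x, List.In x l /\ ~~ P x.
Proof.
elim: l => //= y l IH; rewrite negb_and => /orP[h|/IH [x [h1 h2]]].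
  by exists y; split => //; left.
by exists x; split => //; right.
Qed.

Lemma free_matoms pi c s : isg s -> ~~ fresh [::] c s ->
  perm_act pi c \in matoms (copy (pact pi s)).
Proof.
elim/nt_ind: s => /=.
- by move=> a _; rewrite negbK => /eqP ->; rewrite inE.
- by [].
- move=> a s IH hg; rewrite negb_or => /andP[ha hf]; rewrite inE IH ?orbT //.
- by move=> f s IH hg hf; apply: IH.
- move=> ts IH hg /notall_In [x [hx hf]].
  apply: (@in_flatten_map2 _ _ matoms _ _ (copy (pact pi x))).
    by apply: List.in_map; apply: List.in_map.
  by apply: IH => //; apply: (allP' hg).
Qed.

Lemma fresh_atom_neq x l : x \in l -> x != fresh_atom l.
Proof.
move=> h; rewrite neq_ltn; apply/orP; left; rewrite ltnS /fresh_atom.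
elim: l h => //= y l IH; rewrite inE => /orP[/eqP ->|/IH h]; first exact: leq_maxl.
exact: leq_trans h (leq_maxr _ _).
Qed.

Lemma lookup_vals th x u : lookup th x = Some u ->
  {subset matoms u <= flatten (map (fun p => matoms p.2) th)}.
Proof.
elim: th => //= [[b v]] th IH; case: eqP => _.
  by move=> [<-] y hy; rewrite mem_cat hy.
by move=> /IH h y /h hy; rewrite mem_cat hy orbT.
Qed.

Lemma all2_map (A B : Type) (r : rel B) (f g : A -> B) l :
  (forall x, List.In x l -> r (f x) (g x)) -> all2 r (map f l) (map g l).
Proof.
elim: l => //= x l IH h; rewrite h /=; last by left.
by apply: IH => y hy; apply: h; right.
Qed.

Lemma ms (p pi : perm) (g : nterm) : isg g -> forall E th,
  (forall c, ~~ fresh [::] c g -> exists d,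
     msubst th (MAtom (perm_act pi c)) = MAtom d /\ var_rel E (perm_act p c) d) ->
  aeq_env E (copy (pact p g)) (msubst th (copy (pact pi g))).
Proof.
elim/nt_ind: g => /=.
- move=> a _ E th h; have [|d [-> hd]] := h a; first by rewrite /= eqxx.
  exact: hd.
- by [].
- move=> a s IH hg E th h.
  set cf := fresh_atom _.
  apply: IH => // c hc.
  have [ca|nca] := eqVneq c a.
    subst c; exists cf; split; first by rewrite /= eqxx.
    by rewrite /= !eqxx.
  have hc' : ~~ fresh [::] c (NAbs a s) by rewrite /= negb_or nca.
  have [d [hd1 hd2]] := h c hc'.
  have npa : (perm_act pi c == perm_act pi a) = false.
    by apply/negbTE; apply: contra nca => /eqP /perm_inj ->.
  have npa' : (perm_act p a == perm_act p c) = false.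
    by apply/negbTE; apply: contra nca => /eqP /perm_inj ->.
  exists d; split.
    by move: hd1; rewrite /= npa.
  rewrite /= npa'.
  have -> : (cf == d) = false.
    apply/negbTE; rewrite eq_sym; apply: fresh_atom_neq.
    move: hd1 => /=; case E1: (lookup th (perm_act pi c)) => [u|] hu.
      have := lookup_vals E1; rewrite hu => /(_ d); rewrite inE eqxx => /(_ isT) hd.
      by rewrite inE !mem_cat hd !orbT.
    case: hu => <-; rewrite inE mem_cat free_matoms ?orbT //.
  exact: hd2.
- move=> f s IH hg E th h; rewrite eqxx /=; apply: IH => //.
- move=> ts IH hg E th h; rewrite -!map_comp; apply: all2_map => x hx /=.
  apply: IH => // [|c hc]; first exact: (allP' hg).
  apply: h; rewrite /=; apply: contra hc => ha; exact: (allP' ha).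
Qed.

Lemma mem_Lambda t X a : reflect (exists q bs, (q, X, bs) \in var_occs [::] t /\ a \in bs)
  (a \in Lambda t X).
Proof.
apply: (iffP flattenP).
  move=> [bs /mapP [[[q Y] bs'] + ->] ha]; rewrite mem_filter /= => /andP[/eqP -> h].
  by exists q, bs'.
move=> [q [bs [h ha]]]; exists bs => //; apply/mapP; exists (q, X, bs) => //.
by rewrite mem_filter /= eqxx.
Qed.

Lemma mem_xs D L r X c : (c \in xs_of D L r X) = ((c, X) \notin D) && (perm_act r c \in L X).
Proof.
rewrite /xs_of mem_sort mem_undup mem_filter; congr andb.
apply/mapP/idP => [[a ha ->]|h]; first by rewrite perm_Kinv.
by exists (perm_act r c) => //; rewrite perm_invK.
Qed.

Section Closed.
Variables (D : fctx) (t : nterm).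
Hypothesis ct : closed_term D t.
Let occs := var_occs [::] t.

Lemma keyK r X bsr c : (r, X, bsr) \in occs -> (c, X) \notin D ->
  perm_act r c \in Lambda t X ->
  forall r' bs', (r', X, bs') \in occs -> perm_act r' c \in bs'.
Proof.
case: ct => _ [C2 C3] hr hD /mem_Lambda [q [bs [hq hin]]] r' bs' hr'.
have [hqc|hqc] := boolP (perm_act q c \in bs).
  have [//|] := C2 q X bs c hq hqc r' bs' hr'; by rewrite (negbTE hD).
have [e|ne] := eqVneq (perm_act q c) (perm_act r c).
  by move: hqc; rewrite e hin.
by have := C3 q bs r bsr X c hq hr ne (or_introl hqc); rewrite (negbTE hD).
Qed.

Lemma xs_same p bp pi bpi X : (p, X, bp) \in occs -> (pi, X, bpi) \in occs ->
  xs_of D (Lambda t) p X = xs_of D (Lambda t) pi X.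
Proof.
move=> hp hpi.
have hm : forall c, (c \in xs_of D (Lambda t) p X) = (c \in xs_of D (Lambda t) pi X).
  move=> c; rewrite !mem_xs; have [hD|hD] //= := boolP ((c, X) \notin D).
  apply/idP/idP => h.
    by apply/mem_Lambda; exists pi, bpi; split => //; apply: keyK hp hD h _ _ hpi.
  by apply/mem_Lambda; exists p, bp; split => //; apply: keyK hpi hD h _ _ hp.
apply: (sorted_eq leq_trans anti_leq); try exact: (sort_sorted leq_total).
apply: uniq_perm; rewrite ?sort_uniq ?undup_uniq //.
Qed.

Lemma free_same p bp pi bpi X c : (p, X, bp) \in occs -> (pi, X, bpi) \in occs ->
  (c, X) \notin D -> c \notin xs_of D (Lambda t) pi X -> perm_act pi c = perm_act p c.
Proof.
case: ct => _ [_ C3] hp hpi hD; rewrite mem_xs hD /= => hL.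
have hb : perm_act pi c \notin bpi.
  by apply: contra hL => h; apply/mem_Lambda; exists pi, bpi.
have [//|ne] := eqVneq (perm_act pi c) (perm_act p c).
by have := C3 pi bpi p bp X c hpi hp ne (or_introl hb); rewrite (negbTE hD).
Qed.

Lemma leftmost_ex p X bp : (p, X, bp) \in occs ->
  exists pi bpi, leftmost_perm t X = Some pi /\ (pi, X, bpi) \in occs.
Proof.
move=> hp; rewrite /leftmost_perm.
case E: [seq o.1.1 | o <- var_occs [::] t & o.1.2 == X] => [|pi l].
  have : p \in [seq o.1.1 | o <- var_occs [::] t & o.1.2 == X].
    by apply/mapP; exists (p, X, bp) => //; rewrite mem_filter /= eqxx hp.
  by rewrite E.
have : pi \in pi :: l by rewrite inE eqxx.
rewrite -E => /mapP [[[q Y] b]]; rewrite mem_filter /= => /andP[/eqP hY h] hq.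
by exists q, b; subst; rewrite E.
Qed.

End Closed.

Lemma var_rel_id E a b : all (fun q => q.1 == q.2) E -> var_rel E a b = (a == b).
Proof.
elim: E => //= [[x y]] E IH /= /andP[/eqP e h]; subst y; rewrite IH //.
case: (eqVneq x a) => [<-|nx]; first by rewrite eq_sym.
case: (eqVneq x b) => [e|//]; subst b; by rewrite eq_sym (negbTE nx).
Qed.

Lemma lookup_zip pi p xs c :
  lookup (zip (map (perm_act pi) xs) (map (fun a => MAtom (perm_act p a)) xs)) (perm_act pi c)
  = if c \in xs then Some (MAtom (perm_act p c)) else None.
Proof.
elim: xs => //= x xs IH; rewrite inE IH.
have [->|nx] := eqVneq c x; first by rewrite eqxx.
have -> : (perm_act pi c == perm_act pi x) = false.
  by apply/negbTE; apply: contra nx => /eqP /perm_inj ->.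
by [].
Qed.

Section Core.
Variables (D : fctx) (t : nterm) (sg : nsubst).
Hypothesis ct : closed_term D t.
Hypothesis sat : satisfies sg D.
Hypothesis gr : ground (napply sg t).

Lemma susp_case p X bp E : (p, X, bp) \in var_occs [::] t ->
  all (fun q => q.1 == q.2) E ->
  aeq_env E (trans D (Lambda t) (napply sg (NSusp p X)))
            (valapp (trans_subst D t sg) (trans D (Lambda t) (NSusp p X))).
Proof.
move=> hp hE.
have [u [hu gu]] := ground_napply gr hp.
have [pi [bpi [hl hpi]]] := leftmost_ex hp.
rewrite /= hu /trans_subst hu hl -map_comp /=.
rewrite !trans_isg ?isg_pact // (xs_same ct hp hpi).
have -> : [seq (valapp (trans_subst D t sg) \o (fun a => MAtom (perm_act p a))) i
          | i <- xs_of D (Lambda t) pi X] =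
          [seq MAtom (perm_act p a) | a <- xs_of D (Lambda t) pi X] by apply: eq_map.
apply: ms => // c hc.
have hD : (c, X) \notin D.
  apply/negP => hD; have := sat hD; rewrite /= hu pact_nil => h.
  by rewrite h in hc.
rewrite /= lookup_zip; case: ifP => hin.
  by exists (perm_act p c); rewrite var_rel_id.
exists (perm_act pi c); split => //.
by rewrite (free_same ct hp hpi hD (negbT hin)) var_rel_id.
Qed.

Lemma core s B E :
  (forall p X bs, (p, X, bs) \in var_occs B s -> exists bs', (p, X, bs') \in var_occs [::] t) ->
  all (fun q => q.1 == q.2) E ->
  aeq_env E (trans D (Lambda t) (napply sg s))
            (valapp (trans_subst D t sg) (trans D (Lambda t) s)).
Proof.
elim/nt_ind: s B E.
- by move=> a B E _ hE; rewrite /= (var_rel_id _ _ hE).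
- move=> p X B E h hE.
  have [bs' hb] : exists bs', (p, X, bs') \in var_occs [::] t by apply: (h p X B); rewrite /= inE.
  exact: susp_case hb hE.
- move=> a s IH B E h hE /=; apply: (IH (a :: B)) => //=.
  by rewrite eqxx.
- move=> f s IH B E h hE /=; rewrite eqxx /=; exact: (IH B).
- move=> ts IH B E h hE /=; rewrite -!map_comp; apply: all2_map => x hx /=.
  apply: (IH x hx B) => // p X bs hb; apply: (h p X bs).
  exact: in_flatten_map2 hx hb.
Qed.

End Core.

Theorem mainTheorem9 (D : fctx) (t : nterm) (sg : nsubst) :
  closed_term D t ->
  satisfies sg D ->
  (forall X u, sg X = Some u -> X \in vars t) ->
  ground (napply sg t) ->
  forall t', subterm t' t ->
    aeq (trans D (Lambda t) (napply sg t'))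
        (valapp (trans_subst D t sg) (trans D (Lambda t) t')).
Proof.
move=> ct sat _ gr t' hs; rewrite /aeq.
apply: (core ct sat gr (B := [::])) => // p X bs hb.
exact: (subterm_occs hs hb).
Qed.
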